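(* Let $(W,S)$ be a right-angled Coxeter system, $G$ a subgroup of $\mathrm{Aut}(W,S)$, $I\subset S$, and $\{g_i\}_{i\in I}$ a family of involutions in $G$ such that: (i) $g_i(s)\in S$ for all $i\in I$, $s\in S$; (ii) for all $i,j\in I$ with $ij=ji$, either [$g_i(j)\in I$, $g_j(i)=i$ and $g_{g_i(j)}=g_ig_jg_i$] or [$g_j(i)\in I$, $g_i(j)=j$ and $g_{g_j(i)}=g_jg_ig_j$]; (iii) $g_i(i)=i$ for all $i\in I$. Let $H$ be the subgroup of $W\rtimes G$ generated by $\{ig_i\}_{i\in I}$, and let $L$ be the group generated by symbols $l_i$, $i\in I$, subject to the relations $l_i^2=1$ for all $i\in I$, and $l_il_j=l_{g_i(j)}l_i$ whenever $ij=ji$, $g_j(i)=i$, $g_i(j)\in I$ and $g_{g_i(j)}=g_ig_jg_i$. Then the map $\varphi:L\to H$, $l_i\mapsto ig_i$, is a well-defined group isomorphism.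
   Context: A right-angled Coxeter system is a Coxeter system whose Coxeter matrix has all off-diagonal entries in $\{2,\infty\}$. $\mathrm{Aut}(W,S)$ denotes the group of automorphisms of $W$ that map $S$ bijectively onto $S$. $W\rtimes G$ is the semidirect product with multiplication $(x,\alpha)(y,\beta)=(x\alpha(y),\alpha\beta)$, and $ig_i$ denotes the element $(i,g_i)$. *)

(* Defs.v *)
From Stdlib Require Import List.
Import ListNotations.
Set Implicit Arguments.

(** * Coxeter systems given by a Coxeter matrix; W is the presented group.
    [m s t = 0] encodes m(s,t) = infinity. *)

Fixpoint rep {A : Type} (n : nat) (w : list A) : list A :=
  match n with O => [] | S k => w ++ rep k w end.

Definition coxeter_matrix {S : Type} (m : S -> S -> nat) : Prop :=
  (forall s, m s s = 1) /\ (forall s t, m s t = m t s) /\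
  (forall s t, s <> t -> m s t = 0 \/ 2 <= m s t).

Definition right_angled {S : Type} (m : S -> S -> nat) : Prop :=
  coxeter_matrix m /\ (forall s t, s <> t -> m s t = 2 \/ m s t = 0).

(** Congruence on words generated by a set of relators [rel]
    (equations [r ~ []]); since all generators are involutions in our
    presentations, words modulo this congruence form the presented group. *)
Inductive wcong {A : Type} (rel : list A -> Prop) : list A -> list A -> Prop :=
| wc_rel : forall u r v, rel r -> wcong rel (u ++ r ++ v) (u ++ v)
| wc_refl : forall u, wcong rel u u
| wc_sym : forall u v, wcong rel u v -> wcong rel v u
| wc_trans : forall u v w, wcong rel u v -> wcong rel v w -> wcong rel u w.

Definition cox_rel {S : Type} (m : S -> S -> nat) (r : list S) : Prop :=
  exists s t, 1 <= m s t /\ r = rep (m s t) [s; t].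

Definition Weq {S : Type} (m : S -> S -> nat) : list S -> list S -> Prop :=
  wcong (cox_rel m).

(** Aut(W,S): an automorphism of W mapping S bijectively onto S is
    determined by (and represented as) its restriction sigma : S -> S,
    which must be a bijection of S whose letter-wise extension to words
    induces a well-defined injective endomorphism of W. *)
Definition autWS {S : Type} (m : S -> S -> nat) (sigma : S -> S) : Prop :=
  (exists tau : S -> S, (forall s, tau (sigma s) = s) /\ (forall s, sigma (tau s) = s)) /\
  (forall u v, Weq m u v <-> Weq m (map sigma u) (map sigma v)).

Definition subgroup_Aut {S : Type} (m : S -> S -> nat) (G : (S -> S) -> Prop) : Prop :=
  (forall a, G a -> autWS m a) /\
  G (fun s => s) /\
  (forall a b, G a -> G b -> G (fun s => a (b s))) /\
  (forall a b, G a -> (forall s, a (b s) = s /\ b (a s) = s) -> G b) /\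
  (forall a b, G a -> (forall s, a s = b s) -> G b).

Definition sd (S : Type) : Type := (list S * (S -> S))%type.

Definition sd_mul {S : Type} (p q : sd S) : sd S :=
  (fst p ++ map (snd p) (fst q), fun s => snd p (snd q s)).

Definition sd_one {S : Type} : sd S := ([], fun s => s).

Definition sd_eq {S : Type} (m : S -> S -> nat) (p q : sd S) : Prop :=
  Weq m (fst p) (fst q) /\ (forall s, snd p s = snd q s).

Inductive inH {S : Type} (m : S -> S -> nat) (I : S -> Prop) (g : S -> S -> S)
  : sd S -> Prop :=
| H_one : inH m I g sd_one
| H_gen : forall i, I i -> inH m I g ([i], g i)
| H_mul : forall p q, inH m I g p -> inH m I g q -> inH m I g (sd_mul p q)
| H_inv : forall p q, inH m I g p -> sd_eq m (sd_mul p q) sd_one -> inH m I g q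
| H_eq : forall p q, inH m I g p -> sd_eq m p q -> inH m I g q.

Definition L_rel {S : Type} (m : S -> S -> nat) (I : S -> Prop) (g : S -> S -> S)
  (r : list S) : Prop :=
  (exists i, I i /\ r = [i; i]) \/
  (exists i j, I i /\ I j /\ Weq m [i; j] [j; i] /\ g j i = i /\ I (g i j) /\
     (forall s, g (g i j) s = g i (g j (g i s))) /\
     r = [i; j; i; g i j]).
(* l_i l_j = l_{g_i(j)} l_i  is equivalent, given l_k^2 = 1, to the relator
   l_i l_j l_i l_{g_i(j)} = 1. *)

Definition Leq {S : Type} (m : S -> S -> nat) (I : S -> Prop) (g : S -> S -> S)
  : list S -> list S -> Prop := wcong (L_rel m I g).

Definition wordI {S : Type} (I : S -> Prop) (u : list S) : Prop := Forall I u.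

Fixpoint phi {S : Type} (g : S -> S -> S) (u : list S) : sd S :=
  match u with
  | [] => sd_one
  | i :: u' => sd_mul ([i], g i) (phi g u')
  end.

(* Main.v *)
Require Import Defs.
From Stdlib Require Import List Lia Classical.
Import ListNotations.

Inductive star {A : Type} (R : A -> A -> Prop) : A -> A -> Prop :=
| st_refl : forall x, star R x x
| st_step : forall x y z, R x y -> star R y z -> star R x z.

Lemma star_trans {A} (R : A -> A -> Prop) x y z :
  star R x y -> star R y z -> star R x z.
Proof. intros H1 H2; induction H1; [assumption | eapply st_step; eauto]. Qed.

Lemma star_one {A} (R : A -> A -> Prop) x y : R x y -> star R x y.
Proof. intros; eapply st_step; [eassumption | constructor]. Qed.

Lemma star_map {A B} (R : A -> A -> Prop) (R' : B -> B -> Prop) (f : A -> B) :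
  (forall x y, R x y -> R' (f x) (f y)) -> forall x y, star R x y -> star R' (f x) (f y).
Proof. intros Hf x y H; induction H; [constructor | eapply st_step; eauto]. Qed.

Lemma star_mono {A} (R R' : A -> A -> Prop) :
  (forall x y, R x y -> R' x y) -> forall x y, star R x y -> star R' x y.
Proof. intros Hf x y H; induction H; [constructor | eapply st_step; eauto]. Qed.

Section Conf.
Variable A : Type.
Variable comm : A -> A -> Prop.
Hypothesis comm_sym : forall a b, comm a b -> comm b a.
Hypothesis comm_irr : forall a, ~ comm a a.

Inductive sw : list A -> list A -> Prop :=
| sw_here : forall a b q, comm a b -> sw (a :: b :: q) (b :: a :: q)
| sw_cons : forall c u v, sw u v -> sw (c :: u) (c :: v).

Inductive dl : list A -> list A -> Prop :=
| dl_here : forall s r q, Forall (comm s) r -> dl (s :: r ++ s :: q) (r ++ q)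
| dl_cons : forall c u v, dl u v -> dl (c :: u) (c :: v).

Definition step x y := sw x y \/ dl x y.
Definition J x y := exists z, star step x z /\ star step y z.

Lemma sw_sym x y : sw x y -> sw y x.
Proof. induction 1; constructor; auto. Qed.

Lemma swe_sym x y : star sw x y -> star sw y x.
Proof.
  induction 1; [constructor|].
  eapply star_trans; [eassumption | apply star_one, sw_sym; auto].
Qed.

Lemma swe_step x y : star sw x y -> star step x y.
Proof. apply star_mono; intros; left; auto. Qed.

Lemma dl_step x y : dl x y -> star step x y.
Proof. intros; apply star_one; right; auto. Qed.

Lemma step_cons c x y : star step x y -> star step (c :: x) (c :: y).
Proof.
  apply star_map with (f := cons c); intros ? ? [H|H]; [left|right]; constructor; auto.
Qed.

Lemma swe_cons c x y : star sw x y -> star sw (c :: x) (c :: y).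
Proof. apply star_map with (f := cons c); intros; constructor; auto. Qed.

Lemma J_refl x : J x x.
Proof. exists x; split; constructor. Qed.
Lemma J_sym x y : J x y -> J y x.
Proof. intros [z [H1 H2]]; exists z; auto. Qed.
Lemma J_cons c x y : J x y -> J (c :: x) (c :: y).
Proof. intros [z [H1 H2]]; exists (c :: z); split; apply step_cons; auto. Qed.

Lemma swaps_across s r q : Forall (comm s) r -> star sw (s :: r ++ q) (r ++ s :: q).
Proof.
  induction r as [|t r IH]; simpl; intros H; [constructor|].
  inversion H; subst.
  eapply st_step; [apply sw_here; eauto|].
  apply swe_cons, IH; auto.
Qed.

Lemma len_sw x y : sw x y -> length x = length y.
Proof. induction 1; simpl; auto. Qed.
Lemma len_swe x y : star sw x y -> length x = length y.
Proof. induction 1; auto. rewrite (len_sw _ _ H); auto. Qed.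
Lemma len_dl x y : dl x y -> length x = S (S (length y)).
Proof. induction 1; simpl; [rewrite !length_app; simpl; lia | lia]. Qed.
Lemma len_star x y : star step x y -> length y <= length x.
Proof.
  induction 1; auto. destruct H as [H|H];
  [rewrite (len_sw _ _ H) | rewrite (len_dl _ _ H)]; lia.
Qed.

Lemma dl_inv x y : dl x y ->
  (exists s r q, x = s :: r ++ s :: q /\ Forall (comm s) r /\ y = r ++ q) \/
  (exists c u v, x = c :: u /\ y = c :: v /\ dl u v).
Proof. destruct 1; [left; eauto 7 | right; eauto 7]. Qed.

Lemma sw_inv x y : sw x y ->
  (exists a b q, x = a :: b :: q /\ comm a b /\ y = b :: a :: q) \/
  (exists c u v, x = c :: u /\ y = c :: v /\ sw u v).
Proof. destruct 1; [left; eauto 7 | right; eauto 7]. Qed.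

Lemma list_split2 (a b c d : list A) x y : a ++ x :: c = b ++ y :: d ->
  (exists e, a = b ++ y :: e /\ d = e ++ x :: c) \/ (a = b /\ x = y /\ c = d) \/
  (exists e, b = a ++ x :: e /\ c = e ++ y :: d).
Proof.
  revert b; induction a as [|h a IH]; intros [|h' b]; simpl; intros H;
    injection H; intros; subst.
  - right; left; auto.
  - right; right; exists b; auto.
  - left; exists a; auto.
  - destruct (IH b H0) as [[e [E1 E2]]|[[E1 [E2 E3]]|[e [E1 E2]]]]; subst.
    + left; exists e; auto.
    + right; left; auto.
    + right; right; exists e; auto.
Qed.

Lemma first_occ s r1 q1 r2 q2 : Forall (comm s) r1 -> Forall (comm s) r2 ->
  r1 ++ s :: q1 = r2 ++ s :: q2 -> r1 = r2 /\ q1 = q2.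
Proof.
  revert r2; induction r1 as [|h r1 IH]; intros [|h' r2]; simpl; intros H1 H2 E;
    injection E; intros; subst; auto.
  - inversion H2; subst; exfalso; eapply comm_irr; eauto.
  - inversion H1; subst; exfalso; eapply comm_irr; eauto.
  - inversion H1; inversion H2; subst.
    destruct (IH r2) as [-> ->]; auto.
Qed.

Lemma HT r s q y : Forall (comm s) r -> dl (r ++ s :: q) y -> J (r ++ q) (s :: y).
Proof.
  revert y; induction r as [|t r0 IH]; intros y Hr Hd; simpl in *.
  - destruct (dl_inv _ _ Hd) as [[s0 [r1 [q0 [E [F Y]]]]]|[c [u [v [E [Y D]]]]]].
    + injection E; intros; subst.
      exists (r1 ++ s0 :: q0); split; [constructor|].
      apply swe_step, swaps_across; auto.
    + injection E; intros; subst.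
      exists v; split; [apply dl_step; auto|].
      apply dl_step. apply (dl_here _ [] v); constructor.
  - inversion Hr; subst.
    destruct (dl_inv _ _ Hd) as [[s0 [r1 [q0 [E [F Y]]]]]|[c [u [v [E [Y D]]]]]].
    + injection E; intros E' ->; subst.
      destruct (list_split2 _ _ _ _ _ _ E') as [[e [E1 E2]]|[[E1 [E2 E3]]|[e [E1 E2]]]]; subst.
      *
        rewrite Forall_app in H2; destruct H2 as [F1 F2]; inversion F2; subst.
        exists (r1 ++ e ++ q); split.
        -- apply dl_step. rewrite <- app_assoc. simpl. apply dl_here; auto.
        -- apply dl_step.
           replace (s :: r1 ++ e ++ s :: q) with (s :: (r1 ++ e) ++ s :: q)
             by (rewrite <- app_assoc; reflexivity).
           replace (r1 ++ e ++ q) with ((r1 ++ e) ++ q) by (symmetry; apply app_assoc).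
           apply dl_here. apply Forall_app; auto.
      * exfalso; eapply comm_irr; eauto.
      *
        rewrite Forall_app in F; destruct F as [F1 F2]; inversion F2; subst.
        exists (r0 ++ e ++ q0); split.
        -- apply dl_step.
           replace (s0 :: r0 ++ e ++ s0 :: q0) with (s0 :: (r0 ++ e) ++ s0 :: q0)
             by (rewrite <- app_assoc; reflexivity).
           replace (r0 ++ e ++ q0) with ((r0 ++ e) ++ q0) by (symmetry; apply app_assoc).
           apply dl_here. apply Forall_app; auto.
        -- apply dl_step. rewrite <- app_assoc. simpl. apply dl_here; auto.
    + injection E; intros; subst.
      destruct (IH v) as [z [Z1 Z2]]; auto.
      exists (c :: z); split; [apply step_cons; auto|].
      eapply st_step; [left; apply sw_here; auto|]. apply step_cons; auto.
Qed.

Lemma LC b b1 b2 : dl b b1 -> dl b b2 -> J b1 b2.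
Proof.
  intros H1; revert b2; induction H1 as [s r q F|c u v D IH]; intros b2 H2;
    destruct (dl_inv _ _ H2) as [[s0 [r1 [q0 [E [F0 Y]]]]]|[c0 [u0 [v0 [E [Y D0]]]]]];
    injection E; intros; subst.
  - destruct (first_occ _ _ _ _ _ F F0 H) as [-> ->]. apply J_refl.
  - apply HT; auto.
  - apply J_sym, HT; auto.
  - apply J_cons; auto.
Qed.

Lemma SWH r c q v : Forall (comm c) r -> sw (r ++ c :: q) v ->
  exists b', dl (c :: v) b' /\ star sw (r ++ q) b'.
Proof.
  revert v; induction r as [|t r0 IH]; intros v Hr Hs; simpl in *.
  - destruct (sw_inv _ _ Hs) as [[a [b [q' [E [C Y]]]]]|[c' [u [v' [E [Y S']]]]]];
      injection E; intros; subst.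
    + exists (b :: q'); split; [|constructor].
      apply (dl_here _ [_] _); auto.
    + exists v'; split; [apply (dl_here _ [] _); auto | apply star_one; auto].
  - inversion Hr; subst.
    destruct (sw_inv _ _ Hs) as [[a [b [q' [E [C Y]]]]]|[c' [u [v' [E [Y S']]]]]];
      injection E; intros; subst.
    + destruct r0 as [|t' r1]; simpl in *; injection H; intros; subst.
      * eexists; split; [apply (dl_here _ [] _); auto | constructor].
      * inversion H2; subst.
        eexists; split.
        -- apply (dl_here _ (_ :: _ :: _) _); repeat apply Forall_cons; auto.
        -- apply star_one, sw_here; auto.
    + destruct (IH v') as [b0 [D0 E0]]; auto.
      destruct (dl_inv _ _ D0) as [[s0 [r1 [q0 [E' [F0 Y']]]]]|[c0 [u0 [v0 [E' [Y' D1]]]]]];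
        injection E'; intros; subst.
      * eexists; split.
        -- apply (dl_here _ (_ :: _) _); repeat apply Forall_cons; eauto.
        -- apply swe_cons; eauto.
      * eexists; split.
        -- do 2 apply dl_cons; eauto.
        -- eapply star_trans; [apply swe_cons; exact E0|].
           apply star_one, sw_here; auto.
Qed.

Lemma L1 a b : sw a b -> forall a', dl a a' -> exists b', dl b b' /\ star sw a' b'.
Proof.
  induction 1 as [x y q C|c u v S' IH]; intros a' Hd;
    destruct (dl_inv _ _ Hd) as [[s0 [r1 [q0 [E [F0 Y]]]]]|[c0 [u0 [v0 [E [Y D0]]]]]];
    injection E; intros; subst.
  - destruct r1 as [|y' r0]; simpl in *; injection H; intros; subst.
    + exfalso; eapply comm_irr; eauto.
    + inversion F0; subst.
      exists (y' :: r0 ++ q0); split; [apply dl_cons, dl_here; auto | constructor].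
  - destruct (dl_inv _ _ D0) as [[s1 [r2 [q1 [E' [F1 Y']]]]]|[c1 [u1 [v1 [E' [Y' D1]]]]]];
      injection E'; intros; subst.
    + exists (c0 :: r2 ++ q1); split; [|constructor].
      apply (dl_here s1 (c0 :: r2) q1); auto.
    + exists (c1 :: c0 :: v1); split; [do 2 apply dl_cons; auto|].
      apply star_one, sw_here; auto.
  - apply SWH; auto.
  - destruct (IH v0) as [b0 [D1 E1]]; auto.
    exists (c0 :: b0); split; [apply dl_cons; auto | apply swe_cons; auto].
Qed.

Lemma Lmulti a b : star sw a b -> forall a', dl a a' -> exists b', dl b b' /\ star sw a' b'.
Proof.
  induction 1 as [x|x y z H1 H2 IH]; intros a' Hd; [exists a'; split; [auto|constructor]|].
  destruct (L1 _ _ H1 _ Hd) as [b1 [D1 E1]].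
  destruct (IH _ D1) as [b2 [D2 E2]].
  exists b2; split; auto. eapply star_trans; eauto.
Qed.

Lemma PN x y : star step x y -> star sw x y \/
  exists a a', star sw x a /\ dl a a' /\ star step a' y.
Proof.
  induction 1 as [x|x y z H1 H2 IH]; [left; constructor|].
  destruct H1 as [H1|H1].
  - destruct IH as [E|[a [a' [E [D S']]]]].
    + left; eapply st_step; eauto.
    + right; exists a, a'; repeat split; auto. eapply st_step; eauto.
  - right; exists x, y; repeat split; auto. constructor.
Qed.

Lemma conf n : forall x, length x < n -> forall y1 y2,
  star step x y1 -> star step x y2 -> J y1 y2.
Proof.
  induction n as [|n IHn]; intros x Hx y1 y2 H1 H2; [lia|].
  destruct (PN _ _ H1) as [E1|[a [a' [Ea [Da Ha']]]]].
  - exists y2; split; [|constructor].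
    eapply star_trans; [apply swe_step, swe_sym, E1 | exact H2].
  - destruct (PN _ _ H2) as [E2|[b [b' [Eb [Db Hb']]]]].
    + exists y1; split; [constructor|].
      eapply star_trans; [apply swe_step, swe_sym, E2 | exact H1].
    + assert (Eab : star sw a b) by (eapply star_trans; [apply swe_sym, Ea | exact Eb]).
      destruct (Lmulti _ _ Eab _ Da) as [a'' [Da'' Ea'']].
      destruct (LC _ _ _ Da'' Db) as [z0 [Z1 Z2]].
      assert (La : length x = length a) by (apply len_swe; auto).
      assert (Lb : length x = length b) by (apply len_swe; auto).
      pose proof (len_dl _ _ Da). pose proof (len_dl _ _ Db).
      assert (Hz0 : star step a' z0) by (eapply star_trans; [apply swe_step, Ea'' | exact Z1]).
      destruct (IHn a' ltac:(lia) y1 z0 Ha' Hz0) as [z1 [Y1 Z01]].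
      destruct (IHn b' ltac:(lia) y2 z0 Hb' Z2) as [z2 [Y2 Z02]].
      pose proof (len_star _ _ Z2).
      destruct (IHn z0 ltac:(lia) z1 z2 Z01 Z02) as [z [W1 W2]].
      exists z; split; eapply star_trans; eauto.
Qed.

Lemma J_trans x y z : J x y -> J y z -> J x z.
Proof.
  intros [a [H1 H2]] [b [H3 H4]].
  destruct (conf (S (length y)) y ltac:(lia) a b H2 H3) as [c [C1 C2]].
  exists c; split; eapply star_trans; eauto.
Qed.

End Conf.
Arguments step {A}. Arguments J {A}. Arguments dl {A}. Arguments sw {A}.
Arguments dl_here {A}. Arguments dl_cons {A}. Arguments sw_here {A}. Arguments sw_cons {A}.
Arguments dl_step {A}. Arguments J_refl {A}. Arguments J_sym {A}. Arguments J_trans {A}.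

Lemma wcong_ctx {A} (R : list A -> Prop) p q x y :
  wcong R x y -> wcong R (p ++ x ++ q) (p ++ y ++ q).
Proof.
  induction 1.
  - replace (p ++ (u ++ r ++ v) ++ q) with ((p ++ u) ++ r ++ (v ++ q))
      by (now rewrite !app_assoc).
    replace (p ++ (u ++ v) ++ q) with ((p ++ u) ++ (v ++ q))
      by (now rewrite !app_assoc).
    apply wc_rel; auto.
  - apply wc_refl.
  - apply wc_sym; auto.
  - eapply wc_trans; eauto.
Qed.

Lemma wcong_app {A} (R : list A -> Prop) x x' y y' :
  wcong R x y -> wcong R x' y' -> wcong R (x ++ x') (y ++ y').
Proof.
  intros H1 H2. eapply wc_trans.
  - pose proof (wcong_ctx R [] x' x y H1) as H; simpl in H; exact H.
  - pose proof (wcong_ctx R y [] x' y' H2) as H; rewrite !app_nil_r in H; exact H.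
Qed.

Lemma wcong_cancel {A} (R : list A -> Prop) a b c :
  wcong R (a ++ b) [] -> wcong R (b ++ c) [] -> wcong R a c.
Proof.
  intros H1 H2.
  eapply wc_trans.
  - apply wc_sym. pose proof (wcong_ctx R a [] _ _ H2) as H.
    rewrite !app_nil_r in H. exact H.
  - rewrite app_assoc. pose proof (wcong_ctx R [] c _ _ H1) as H. exact H.
Qed.

Definition commr {S} (m : S -> S -> nat) a b := m a b = 2.

Lemma WP {S} (m : S -> S -> nat) : right_angled m ->
  forall x, Weq m x [] -> star (step (commr m)) x [].
Proof.
  intros RA.
  destruct RA as [[Hd [Hs Ho]] Hra].
  assert (csym : forall a b, commr m a b -> commr m b a)
    by (unfold commr; intros a b H; rewrite Hs; auto).
  assert (cirr : forall a, ~ commr m a a) by (unfold commr; intros a; rewrite Hd; lia).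
  assert (Hdl : forall u x y, dl (commr m) x y -> dl (commr m) (u ++ x) (u ++ y)).
  { induction u; simpl; auto. intros; apply dl_cons; auto. }
  assert (HJ : forall x y, Weq m x y -> J (commr m) x y).
  { induction 1 as [u r v Hr|u|u v H IH|u v w H1 IH1 H2 IH2].
    - exists (u ++ v); split; [|constructor].
      destruct Hr as [s [t [H1 ->]]].
      destruct (classic (s = t)) as [<-|Hst].
      + rewrite Hd; simpl.
        apply dl_step. apply Hdl. apply (dl_here _ s [] v). constructor.
      + destruct (Hra s t Hst) as [E|E]; rewrite E in *; [|lia]. simpl.
        eapply st_step; [right; apply Hdl; apply (dl_here _ s [t] (t :: v))|].
        { constructor; [exact E|constructor]. }
        simpl. apply dl_step. apply Hdl. apply (dl_here _ t [] v). constructor.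
    - apply J_refl.
    - apply J_sym; auto.
    - eapply J_trans; eauto. }
  intros x H. destruct (HJ x [] H) as [z [Z1 Z2]].
  inversion Z2; subst; auto.
  destruct H0 as [H0|H0]; inversion H0.
Qed.

Inductive amove {S} (m : S -> S -> nat) : list S -> list S -> Prop :=
| am_del : forall p a q, amove m (p ++ a :: a :: q) (p ++ q)
| am_sw : forall p a b q, m a b = 2 -> amove m (p ++ a :: b :: q) (p ++ b :: a :: q).

Lemma amove_cons {S} (m : S -> S -> nat) c x y : star (amove m) x y -> star (amove m) (c :: x) (c :: y).
Proof.
  apply star_map with (f := cons c). intros x0 y0 H; destruct H.
  - exact (am_del m (c :: p) a q).
  - exact (am_sw m (c :: p) a b q H).
Qed.

Lemma step_amove {S} (m : S -> S -> nat) x y : star (step (commr m)) x y -> star (amove m) x y.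
Proof.
  induction 1 as [|x y z H1 H2 IH]; [constructor|].
  eapply star_trans; [|exact IH].
  destruct H1 as [H|H]; clear H2 IH.
  - induction H; [apply star_one; exact (am_sw m [] a b q H) | apply amove_cons; auto].
  - induction H as [s r q F|c u v H IHd]; [|apply amove_cons; auto].
    induction r as [|t r IHr]; simpl.
    + apply star_one; exact (am_del m [] s q).
    + inversion F; subst. eapply st_step; [exact (am_sw m [] s t (r ++ s :: q) ltac:(assumption))|].
      apply amove_cons; auto.
Qed.

Section Main.
Variables (S : Type) (m : S -> S -> nat) (I : S -> Prop) (g : S -> S -> S).
Hypothesis RA : right_angled m.
Hypothesis Haut : forall i, I i -> autWS m (g i).
Hypothesis Hinv : forall i, I i -> forall s, g i (g i s) = s.
Hypothesis Hii : forall i j, I i -> I j -> Weq m [i; j] [j; i] ->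
     (I (g i j) /\ g j i = i /\ (forall s, g (g i j) s = g i (g j (g i s))))
     \/
     (I (g j i) /\ g i j = j /\ (forall s, g (g j i) s = g j (g i (g j s)))).
Hypothesis Hfix : forall i, I i -> g i i = i.

Notation T u := (fst (phi g u)).
Notation Gm u := (snd (phi g u)).

Lemma m_diag s : m s s = 1.
Proof. destruct RA as [[H _] _]; auto. Qed.

Lemma Weq_del p q s : Weq m (p ++ s :: s :: q) (p ++ q).
Proof.
  apply (wc_rel _ p [s; s] q). exists s, s. rewrite m_diag. split; auto.
Qed.

Lemma Weq_ss s : Weq m [s; s] [].
Proof. exact (Weq_del [] [] s). Qed.

Lemma Weq_swap a b : m a b = 2 -> Weq m [a; b] [b; a].
Proof.
  intros H. apply wc_sym.
  eapply wc_trans.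
  - apply wc_sym. apply (wc_rel _ [] [a; b; a; b] [b; a]). exists a, b. rewrite H; split; auto.
  - simpl. eapply wc_trans; [exact (Weq_del [a; b; a] [a] b)|].
    exact (Weq_del [a; b] [] a).
Qed.

Lemma T_cons a u : T (a :: u) = a :: map (g a) (T u).
Proof. reflexivity. Qed.
Lemma Gm_cons a u s : Gm (a :: u) s = g a (Gm u s).
Proof. reflexivity. Qed.

Lemma phi_app u x : T (u ++ x) = T u ++ map (Gm u) (T x) /\
  forall s, Gm (u ++ x) s = Gm u (Gm x s).
Proof.
  induction u as [|a u [IH1 IH2]]; simpl.
  - split; auto. symmetry; apply map_id.
  - unfold sd_mul; simpl. rewrite IH1, map_app, map_map. split; auto.
    intros; rewrite IH2; auto.
Qed.

Lemma T_app u x : T (u ++ x) = T u ++ map (Gm u) (T x).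
Proof. apply phi_app. Qed.
Lemma Gm_app u x s : Gm (u ++ x) s = Gm u (Gm x s).
Proof. apply phi_app. Qed.

Lemma pres u : wordI I u -> forall x y, Weq m x y <-> Weq m (map (Gm u) x) (map (Gm u) y).
Proof.
  induction u as [|a u IH]; intros Hu x y; simpl.
  - rewrite !map_id; tauto.
  - inversion Hu; subst. unfold sd_mul; simpl.
    rewrite <- (map_map (Gm u) (g a) x), <- (map_map (Gm u) (g a) y).
    rewrite (IH H2). apply (proj2 (Haut a H1)).
Qed.

Lemma Gm_inj u : wordI I u -> forall x y, Gm u x = Gm u y -> x = y.
Proof.
  induction u as [|a u IH]; intros Hu x y; simpl; auto.
  inversion Hu; subst. unfold sd_mul; simpl. intros E.
  apply IH; auto. rewrite <- (Hinv a H1 (Gm u x)), <- (Hinv a H1 (Gm u y)), E; auto.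
Qed.

Lemma map_invol i l : I i -> map (g i) (map (g i) l) = l.
Proof.
  intros Hi. rewrite map_map. rewrite <- map_id. apply map_ext. intros; apply Hinv; auto.
Qed.

Lemma Lrel_prop r : L_rel m I g r ->
  wordI I r /\ Weq m (T r) [] /\ forall s, Gm r s = s.
Proof.
  intros [[i [Hi ->]] | [i [j [Hi [Hj [C [Hji [Hk [Hg ->]]]]]]]]].
  - split; [repeat constructor; auto|]. simpl; unfold sd_mul; simpl.
    rewrite Hfix; auto. split; [apply Weq_ss|]. intros; apply Hinv; auto.
  - split; [repeat constructor; auto|]. simpl; unfold sd_mul; simpl.
    rewrite Hinv, Hji, Hfix, Hfix; auto.
    split.
    + assert (C' : Weq m [i; g i j] [g i j; i]).
      { pose proof (proj1 (proj2 (Haut i Hi) [i; j] [j; i]) C) as X.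
        simpl in X. rewrite Hfix in X; auto. }
      eapply wc_trans.
      * exact (wcong_app _ [i; g i j] [i; g i j] [i; g i j] [g i j; i] (wc_refl _ _) C').
      * simpl. eapply wc_trans; [exact (Weq_del [i] [i] (g i j))|]. apply Weq_ss.
    + intros s. rewrite Hg. rewrite !Hinv; auto.
Qed.

Lemma part1_gen u v : Leq m I g u v ->
  (wordI I u <-> wordI I v) /\ (wordI I u -> sd_eq m (phi g u) (phi g v)).
Proof.
  induction 1 as [u r v Hr|u|u v H [IH1 IH2]|u v w H1 [IH1 IH2] H2 [IH3 IH4]].
  - destruct (Lrel_prop r Hr) as [Wr [Tr Gr]].
    unfold wordI in *. split.
    + rewrite !Forall_app. tauto.
    + intros Hw. rewrite !Forall_app in Hw. destruct Hw as [Wu [_ Wv]].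
      split.
      * rewrite !T_app, map_app, map_map.
        apply wcong_app; [apply wc_refl|].
        replace (map (Gm u) (T v)) with ([] ++ map (Gm u) (T v)) by reflexivity.
        apply wcong_app.
        -- exact (proj1 (pres u Wu (T r) []) Tr).
        -- rewrite (map_ext (fun x => Gm u (Gm r x)) (Gm u)); [apply wc_refl|].
           intros; rewrite Gr; auto.
      * intros s; simpl. rewrite !Gm_app, Gr; auto.
  - split; [tauto|]. intros; split; [apply wc_refl|auto].
  - split; [tauto|]. intros Hv. destruct (IH2 (proj2 IH1 Hv)) as [A B].
    split; [apply wc_sym; auto| intros; rewrite B; auto].
  - split; [tauto|]. intros Hu. destruct (IH2 Hu) as [A B].
    destruct (IH4 (proj1 IH1 Hu)) as [C D].
    split; [eapply wc_trans; eauto| intros; rewrite B; auto].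
Qed.


Lemma split_T w : forall p x, wordI I w -> T w = p ++ x ->
  exists w1 w2, w = w1 ++ w2 /\ T w1 = p /\ map (Gm w1) (T w2) = x.
Proof.
  induction w as [|i w' IH]; intros [|c p] x Hw E.
  - exists [], []; simpl; split; auto.
  - discriminate.
  - exists [], (i :: w'); simpl; split; auto; split; auto. rewrite map_id; auto.
  - rewrite T_cons in E. injection E; intros E1 ->.
    inversion Hw; subst.
    assert (E2 : T w' = map (g c) p ++ map (g c) x).
    { rewrite <- map_app, <- E1, map_invol; auto. }
    destruct (IH _ _ H2 E2) as [w1 [w2 [-> [F1 F2]]]].
    exists (c :: w1), w2; split; auto. split.
    + rewrite T_cons, F1, map_invol; auto.
    + simpl. unfold sd_mul; simpl.
      rewrite <- (map_map (Gm w1) (g c)), F2, map_invol; auto.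
Qed.

Lemma T_two i j w3 : T (i :: j :: w3) = i :: g i j :: map (fun s => g i (g j s)) (T w3).
Proof. rewrite !T_cons. simpl. rewrite map_map. reflexivity. Qed.

Lemma wordI_app u v : wordI I (u ++ v) <-> wordI I u /\ wordI I v.
Proof. apply Forall_app. Qed.

Lemma lift1 x y : amove m x y -> forall w, wordI I w -> T w = x ->
  exists w', wordI I w' /\ T w' = y /\ Leq m I g w w'.
Proof.
  intros Hm w Hw E.
  destruct Hm as [p a q|p a b q Hab];
  destruct (split_T _ _ _ Hw E) as [w1 [w2 [-> [F1 F2]]]];
  apply wordI_app in Hw; destruct Hw as [W1 W2];
  (destruct w2 as [|i [|j w3]]; [discriminate| discriminate|]);
  rewrite T_two in F2; simpl in F2;
  inversion W2; subst; inversion H2; subst.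
  -
    injection F2; intros Fq Fb Fa. rewrite <- Fa in Fb.
    apply Gm_inj in Fb; auto.
    assert (j = i). { rewrite <- (Hinv i H1 j), Fb, Hfix; auto. }
    subst j.
    exists (w1 ++ w3); split; [apply wordI_app; auto|]. split.
    + rewrite T_app, <- Fq. f_equal. rewrite map_map. apply map_ext. intros; rewrite Hinv; auto.
    + apply (wcong_ctx _ w1 w3 [i; i] []). apply (wc_rel _ [] [i; i] []).
      left; exists i; auto.
  -
    injection F2; intros Fq Fb Fa.
    assert (C0 : Weq m [i; g i j] [g i j; i]).
    { apply (pres w1 W1). simpl. rewrite Fa, Fb. apply Weq_swap; auto. }
    assert (C : Weq m [i; j] [j; i]).
    { pose proof (proj1 (proj2 (Haut i H1) _ _) C0) as X. simpl in X.
      rewrite Hfix, Hinv in X; auto. }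
    destruct (Hii i j H1 H3 C) as [[Ik [Hji Hk]] | [Ik [Hij Hk]]].
    + exists (w1 ++ g i j :: i :: w3). split.
      { apply wordI_app; split; auto. repeat constructor; auto. }
      split.
      * rewrite T_app, T_two. simpl. rewrite Hk, Hfix, Hji, Hfix, Fa, Fb; auto.
        rewrite map_map, <- Fq, map_map. f_equal. f_equal. f_equal.
        apply map_ext; intros; rewrite Hk, Hinv; auto.
      * apply (wcong_ctx _ w1 w3 [i; j] [g i j; i]).
        set (k := g i j) in *.
        assert (R1 : L_rel m I g [i; j; i; k]).
        { right. exists i, j. repeat split; auto. }
        eapply wc_trans; [apply wc_sym; exact (wc_rel _ [i; j] [i; i] [] (or_introl (ex_intro _ i (conj H1 eq_refl))))|].
        eapply wc_trans; [apply wc_sym; exact (wc_rel _ [i; j; i] [k; k] [i] (or_introl (ex_intro _ k (conj Ik eq_refl))))|].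
        exact (wc_rel _ [] [i; j; i; k] [k; i] R1).
    + exists (w1 ++ j :: g j i :: w3). split.
      { apply wordI_app; split; auto. repeat constructor; auto. }
      split.
      * rewrite T_app, T_two. simpl. rewrite Hinv; auto. rewrite Hij in Fb.
        rewrite Fa, Fb.
        rewrite map_map, <- Fq, map_map. f_equal. f_equal. f_equal.
        apply map_ext; intros; rewrite Hk, Hinv; auto.
      * apply (wcong_ctx _ w1 w3 [i; j] [j; g j i]).
        set (k := g j i) in *.
        assert (C2 : Weq m [j; i] [i; j]) by (apply wc_sym; auto).
        assert (R1 : L_rel m I g [j; i; j; k]).
        { right. exists j, i. repeat split; auto. }
        eapply wc_trans; [apply wc_sym; exact (wc_rel _ [] [j; j] [i; j] (or_introl (ex_intro _ j (conj H3 eq_refl))))|].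
        eapply wc_trans; [apply wc_sym; exact (wc_rel _ [j; j; i; j] [k; k] [] (or_introl (ex_intro _ k (conj Ik eq_refl))))|].
        exact (wc_rel _ [j] [j; i; j; k] [k] R1).
Qed.


Lemma lift_star x y : star (amove m) x y -> forall w, wordI I w -> T w = x ->
  exists w', wordI I w' /\ T w' = y /\ Leq m I g w w'.
Proof.
  induction 1 as [x|x y z H1 H2 IH]; intros w Hw E.
  - exists w; repeat split; auto. apply wc_refl.
  - destruct (lift1 _ _ H1 w Hw E) as [w' [W' [E' L']]].
    destruct (IH w' W' E') as [w'' [W'' [E'' L'']]].
    exists w''; repeat split; auto. eapply wc_trans; eauto.
Qed.

Lemma Leq_rev_r v : wordI I v -> Leq m I g (v ++ rev v) [].
Proof.
  induction v as [|a v IH]; intros Hv; simpl; [apply wc_refl|].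
  inversion Hv; subst.
  rewrite app_assoc.
  eapply wc_trans.
  - exact (wcong_ctx _ [a] [a] _ _ (IH H2)).
  - exact (wc_rel _ [] [a; a] [] (or_introl (ex_intro _ a (conj H1 eq_refl)))).
Qed.

Lemma Leq_rev_l v : wordI I v -> Leq m I g (rev v ++ v) [].
Proof.
  induction v as [|a v IH]; intros Hv; simpl; [apply wc_refl|].
  inversion Hv; subst.
  rewrite <- app_assoc. simpl.
  eapply wc_trans; [|exact (IH H2)].
  exact (wc_rel _ (rev v) [a; a] v (or_introl (ex_intro _ a (conj H1 eq_refl)))).
Qed.

Lemma part1 u v : wordI I u -> Leq m I g u v -> sd_eq m (phi g u) (phi g v).
Proof. intros Hu H. apply (part1_gen u v H); auto. Qed.

Lemma part4 u v : wordI I u -> wordI I v -> sd_eq m (phi g u) (phi g v) -> Leq m I g u v.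
Proof.
  intros Hu Hv [E1 E2].
  assert (Wr : wordI I (rev v)) by (apply Forall_rev; auto).
  assert (Hw : wordI I (u ++ rev v)) by (apply wordI_app; auto).
  assert (Z : Weq m (T (u ++ rev v)) []).
  { rewrite T_app.
    eapply wc_trans.
    - apply wcong_app; [exact E1|].
      rewrite (map_ext (Gm u) (Gm v) E2). apply wc_refl.
    - rewrite <- T_app.
      destruct (part1 (v ++ rev v) [] ltac:(apply wordI_app; auto) (Leq_rev_r v Hv)) as [X _].
      exact X. }
  pose proof (step_amove m _ _ (WP m RA _ Z)) as St.
  destruct (lift_star _ _ St _ Hw eq_refl) as [w' [_ [Ew' Lw]]].
  destruct w' as [|c w']; [|discriminate].
  eapply wc_trans.
  - pose proof (wcong_ctx (L_rel m I g) u [] _ _ (Leq_rev_l v Hv)) as X.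
    simpl in X; rewrite !app_nil_r in X. apply wc_sym. exact X.
  - rewrite app_assoc.
    exact (wcong_ctx (L_rel m I g) [] v _ _ Lw).
Qed.

Lemma part2 u v : sd_eq m (phi g (u ++ v)) (sd_mul (phi g u) (phi g v)).
Proof.
  split.
  - rewrite T_app. apply wc_refl.
  - intros s. rewrite Gm_app. reflexivity.
Qed.

Lemma part3 u : wordI I u -> inH m I g (phi g u).
Proof.
  induction u as [|a u IH]; intros Hu; [apply H_one|].
  inversion Hu; subst. apply H_mul; [apply H_gen; auto | auto].
Qed.

Lemma sd_eq_trans p q r : sd_eq m p q -> sd_eq m q r -> sd_eq m p r.
Proof.
  intros [A B] [C D]; split; [eapply wc_trans; eauto | intros; rewrite B; auto].
Qed.

Lemma part5 h : inH m I g h -> exists u, wordI I u /\ sd_eq m (phi g u) h.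
Proof.
  induction 1 as [|i Hi|p q Hp [u [Wu Eu]] Hq [v [Wv Ev]]|p q Hp [u [Wu [Eu1 Eu2]]] Hpq|p q Hp [u [Wu Eu]] Hpq].
  - exists []; split; [constructor|]. split; [apply wc_refl|auto].
  - exists [i]; split; [repeat constructor; auto|]. split; [apply wc_refl|auto].
  - exists (u ++ v); split; [apply wordI_app; auto|].
    destruct Eu as [Eu1 Eu2]. destruct Ev as [Ev1 Ev2].
    split.
    + rewrite T_app. simpl. apply wcong_app; auto.
      rewrite <- (map_ext (Gm u) (snd p) Eu2 (fst q)). apply (proj1 (pres u Wu _ _)); auto.
    + intros s. rewrite Gm_app. simpl. rewrite Eu2, Ev2. auto.
  - exists (rev u).
    assert (Wr : wordI I (rev u)) by (apply Forall_rev; auto).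
    split; auto.
    destruct (part1 (rev u ++ u) [] ltac:(apply wordI_app; auto) (Leq_rev_l u Wu)) as [F1 F2].
    rewrite T_app in F1. simpl in F2.
    assert (F2' : forall s, Gm (rev u) (Gm u s) = s) by (intros s; rewrite <- Gm_app; apply F2).
    destruct Hpq as [H1 H2]. simpl in H1, H2.
    split.
    + apply (wcong_cancel _ _ (map (Gm (rev u)) (fst p))).
      * eapply wc_trans; [|exact F1].
        apply wcong_app; [apply wc_refl|].
        apply (proj1 (pres (rev u) Wr _ _)). apply wc_sym; auto.
      * pose proof (proj1 (pres (rev u) Wr _ _) H1) as X.
        rewrite map_app, map_map in X. simpl in X.
        rewrite (map_ext (fun x => Gm (rev u) (snd p x)) (fun s => s)) in X; [rewrite map_id in X; exact X|].
        intros s. rewrite <- Eu2. apply F2'.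
    + intros s. rewrite <- (F2' (snd q s)), Eu2, H2. reflexivity.
  - exists u; split; auto. eapply sd_eq_trans; eauto.
Qed.

End Main.

Theorem lemma1 (S : Type) (m : S -> S -> nat) (G : (S -> S) -> Prop)
  (I : S -> Prop) (g : S -> S -> S) :
  right_angled m ->
  subgroup_Aut m G ->
  (forall i, I i -> G (g i)) ->
  (forall i, I i -> forall s, g i (g i s) = s) ->
  (forall i, I i -> exists s, g i s <> s) ->
  (forall i j, I i -> I j -> Weq m [i; j] [j; i] ->
     (I (g i j) /\ g j i = i /\ (forall s, g (g i j) s = g i (g j (g i s))))
     \/
     (I (g j i) /\ g i j = j /\ (forall s, g (g j i) s = g j (g i (g j s))))) ->
  (forall i, I i -> g i i = i) ->
  (forall u v, wordI I u -> wordI I v -> Leq m I g u v -> sd_eq m (phi g u) (phi g v)) /\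
  (forall u v, wordI I u -> wordI I v -> sd_eq m (phi g (u ++ v)) (sd_mul (phi g u) (phi g v))) /\
  (forall u, wordI I u -> inH m I g (phi g u)) /\
  (forall u v, wordI I u -> wordI I v -> sd_eq m (phi g u) (phi g v) -> Leq m I g u v) /\
  (forall h, inH m I g h -> exists u, wordI I u /\ sd_eq m (phi g u) h).
Proof.
  intros RA SG HG Hinv _ Hii Hfix.
  assert (Haut : forall i, I i -> autWS m (g i)) by (intros i Hi; apply (proj1 SG); auto).
  split; [intros u v Hu _ H; eapply part1; eauto|].
  split; [intros; apply part2|].
  split; [intros; eapply part3; eauto|].
  split; [intros; eapply part4; eauto|].
  intros; eapply part5; eauto.
Qed.
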